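(* For every $n$-cell regular network, there exist special Jordan subspaces $J_1,\dots,J_m$ to the network such that $\mathbb{C}^n=J_1\oplus\cdots\oplus J_m$.
   Context: A regular network is a finite directed graph on cells $1,\dots,n$ (loops and multiple arrows allowed) in which every cell receives the same number $v$ of arrows (the valency). Its adjacency matrix $A=[a_{ij}]$ has $a_{ij}$ equal to the number of arrows cell $i$ receives from cell $j$; every row sum is $v$. $A$ acts on $\mathbb{C}^n$. A polydiagonal is a subspace of $\mathbb{C}^n$ of the form $\{x : x_i=x_j \text{ for all } (i,j)\in R\}$ for some (possibly empty) set $R$ of index pairs. $F=\{x_1=\cdots=x_n\}$ is the fully synchrony subspace. $P(W)$ is the smallest polydiagonal containing a subspace $W$. For an eigenvalue $\lambda$ of $A$, the generalized eigenspace is $G_\lambda=\operatorname{Ker}(A-\lambda I)^p$ for $p$ large. A Jordan chain of length $k$ for $\lambda$ is a sequence of nonzero vectors $x_1,\dots,x_k$ with $(A-\lambda I)x_1=0$ and $(A-\lambda I)x_i=x_{i-1}$ for $2\le i\le k$; a Jordan subspace is the span of a Jordan chain. A Jordan subspace $W$ of a generalized eigenspace $G$ is a special Jordan subspace to the network if for every Jordan subspace $U$ of $G$ with $\dim U=\dim W$ and $P(U)\subseteq P(W)$, either $P(U)=P(W)$ or $U=F$. *)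

(* Defs.v *)
From HB Require Import structures.
From mathcomp Require Import all_boot all_order all_algebra.
Set Implicit Arguments. Unset Strict Implicit. Unset Printing Implicit Defensive.
Import Order.TTheory GRing.Theory Num.Theory.
Local Open Scope ring_scope.

(* A regular network on n cells: adjacency matrix with natural-number entries
   (a_ij = number of arrows cell i receives from cell j), all row sums equal. *)
Definition regular_network (n : nat) (A : 'M[nat]_n) : Prop :=
  exists v : nat, forall i : 'I_n, (\sum_(j < n) A i j)%N = v.

Definition adjC (C : numClosedFieldType) (n : nat) (A : 'M[nat]_n) : 'M[C]_n :=
  map_mx (fun k : nat => k%:R) A.

(* Vectors of C^n are row vectors 'rV[C]_n; A acts by x |-> x *m A^T
   (i.e. the column action A x). Subspaces are row spaces of matrices. *)

Definition in_polydiag (C : numClosedFieldType) (n : nat) (R : rel 'I_n)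
  (x : 'rV[C]_n) : Prop :=
  forall i j : 'I_n, R i j -> x 0 i = x 0 j.

Definition in_Pclosure (C : numClosedFieldType) (n m : nat) (W : 'M[C]_(m, n))
  (x : 'rV[C]_n) : Prop :=
  forall R : rel 'I_n,
    (forall w : 'rV[C]_n, (w <= W)%MS -> in_polydiag R w) -> in_polydiag R x.

Definition Psub (C : numClosedFieldType) (n m1 m2 : nat)
  (U : 'M[C]_(m1, n)) (W : 'M[C]_(m2, n)) : Prop :=
  forall x : 'rV[C]_n, in_Pclosure U x -> in_Pclosure W x.

Definition Peq (C : numClosedFieldType) (n m1 m2 : nat)
  (U : 'M[C]_(m1, n)) (W : 'M[C]_(m2, n)) : Prop :=
  Psub U W /\ Psub W U.

Definition fullsync (C : numClosedFieldType) (n : nat) : 'rV[C]_n := const_mx 1.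

Definition jordan_chain (C : numClosedFieldType) (n : nat) (A : 'M[C]_n)
  (lam : C) (k : nat) (X : 'M[C]_(k, n)) : Prop :=
  (forall i : 'I_k, row i X != 0) /\
  (forall i : 'I_k, nat_of_ord i = 0%N -> row i X *m (A - lam%:M)^T = 0) /\
  (forall i j : 'I_k, nat_of_ord i = (nat_of_ord j).+1 ->
     row i X *m (A - lam%:M)^T = row j X).

Definition jordan_subspace (C : numClosedFieldType) (n : nat) (A : 'M[C]_n)
  (lam : C) (W : 'M[C]_n) : Prop :=
  exists (k : nat) (X : 'M[C]_(k, n)),
    (0 < k)%N /\ jordan_chain A lam X /\ (W == X)%MS.

Definition special_jordan (C : numClosedFieldType) (n : nat) (A : 'M[C]_n)
  (lam : C) (W : 'M[C]_n) : Prop :=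
  jordan_subspace A lam W /\
  forall U : 'M[C]_n, jordan_subspace A lam U ->
    \rank U = \rank W -> Psub U W ->
    Peq U W \/ (U == fullsync C n)%MS.

(* Main.v *)
Require Import Defs.
From HB Require Import structures.
From mathcomp Require Import all_boot all_order all_algebra.
From Stdlib Require Import Classical.
From mathcomp Require Import zify ring.
Set Implicit Arguments. Unset Strict Implicit. Unset Printing Implicit Defensive.
Import Order.TTheory GRing.Theory Num.Theory.
Local Open Scope ring_scope.



Section Basics.
Variables (C : numClosedFieldType) (n : nat).
Implicit Types (N : 'M[C]_n) (x y z w : 'rV[C]_n).

Definition Kmat N k x : 'M[C]_(k, n) := \matrix_(r < k, j < n) (x *m N ^+ (k.-1 - r)) 0 j.

Lemma row_Kmat N k x (r : 'I_k) : row r (Kmat N k x) = x *m N ^+ (k.-1 - r).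
Proof. by apply/rowP => j; rewrite !mxE. Qed.

Definition pb m (B : 'M[C]_(m, n)) : rel 'I_n := fun i j => [forall r, B r i == B r j].

Lemma pbP m (B : 'M[C]_(m, n)) i j : reflect (forall r, B r i = B r j) (pb B i j).
Proof. by apply: (iffP forallP) => H r; apply/eqP/H. Qed.

Lemma pb_sub m (B : 'M[C]_(m, n)) (u : 'rV[C]_n) i j :
  (u <= B)%MS -> pb B i j -> u 0 i = u 0 j.
Proof.
case/submxP => c -> /pbP H; rewrite !mxE; apply: eq_bigr => r _; by rewrite H.
Qed.

Lemma Pclosure_pb m (W : 'M[C]_(m, n)) x :
  in_Pclosure W x <-> (forall i j, pb W i j -> x 0 i = x 0 j).
Proof.
split=> [H i j Hij | H R HR i j Rij].
  apply: (H (pb W)) => // w Hw a b Hab; exact: pb_sub Hw Hab.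
apply: H; apply/pbP => r.
have := HR (row r W) (row_sub r W) i j Rij; by rewrite !mxE.
Qed.

Lemma pb_refl m (B : 'M[C]_(m, n)) i : pb B i i.
Proof. by apply/pbP. Qed.
Lemma pb_sym m (B : 'M[C]_(m, n)) i j : pb B i j -> pb B j i.
Proof. by move/pbP=> H; apply/pbP=> r; rewrite H. Qed.
Lemma pb_trans m (B : 'M[C]_(m, n)) i j l : pb B i j -> pb B j l -> pb B i l.
Proof. by move=> /pbP H1 /pbP H2; apply/pbP=> r; rewrite H1 H2. Qed.

Lemma Psub_pb m1 m2 (U : 'M[C]_(m1, n)) (W : 'M[C]_(m2, n)) :
  Psub U W <-> (forall i j, pb W i j -> pb U i j).
Proof.
split=> [H i j HW | H x].
  pose x : 'rV[C]_n := \row_l (if pb U i l then 1 else 0).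
  have Hx : in_Pclosure U x.
    apply/Pclosure_pb => a b Hab; rewrite !mxE.
    case: (boolP (pb U i a)) => Ha; case: (boolP (pb U i b)) => Hb //.
    - by case/negP: Hb; exact: pb_trans Ha Hab.
    - by case/negP: Ha; exact: pb_trans Hb (pb_sym Hab).
  have := (proj1 (Pclosure_pb W x) (H x Hx)) i j HW.
  rewrite !mxE pb_refl; case: (pb U i j) => //.
  by move/eqP; rewrite oner_eq0.
move/Pclosure_pb => Hx; apply/Pclosure_pb => i j /H; exact: Hx.
Qed.

Lemma Pclosure_eqmx m1 m2 (U : 'M[C]_(m1, n)) (U' : 'M[C]_(m2, n)) x :
  (U == U')%MS -> in_Pclosure U x -> in_Pclosure U' x.
Proof.
move=> /andP[H _] HU R HR; apply: HU => w Hw; apply: HR; exact: submx_trans Hw H.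
Qed.

End Basics.



Section Chains.
Variables (C : numClosedFieldType) (n : nat).
Implicit Types (N : 'M[C]_n) (x y z w : 'rV[C]_n).

Lemma mulmx_expD N x a b : x *m N ^+ (a + b) = x *m N ^+ a *m N ^+ b.
Proof. by rewrite exprD -mulmxE mulmxA. Qed.

Lemma mulmx_expS N x a : x *m N ^+ a.+1 = x *m N ^+ a *m N.
Proof. by rewrite exprSr -mulmxE mulmxA. Qed.

Lemma expN_ge N x k e : x *m N ^+ k = 0 -> (k <= e)%N -> x *m N ^+ e = 0.
Proof. by move=> H /subnKC <-; rewrite mulmx_expD H mul0mx. Qed.

Definition top N k x := (x *m N ^+ k == 0) && (x *m N ^+ k.-1 != 0).

Lemma top_gt0 N k x : top N k x -> (0 < k)%N.
Proof. by case: k => // /andP[/eqP -> ]; rewrite eqxx. Qed.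

Lemma Kmat_mulN N k x : x *m N ^+ k = 0 -> (Kmat N k x *m N <= Kmat N k x)%MS.
Proof.
move=> Hx; apply/row_subP => r; rewrite row_mul row_Kmat -mulmx_expS.
have kpos : (0 < k)%N by case: (k) r => [[]|].
case: (posnP r) => [r0|rpos].
  by rewrite r0 subn0 prednK // Hx sub0mx.
have lt : (r.-1 < k)%N by rewrite (leq_ltn_trans (leq_pred r)).
have -> : ((k.-1 - r).+1 = k.-1 - Ordinal lt)%N by rewrite /=; move: (ltn_ord r) rpos; clear; lia.
by rewrite -row_Kmat row_sub.
Qed.

Lemma Kmat_mulexpN N k x e : x *m N ^+ k = 0 -> (Kmat N k x *m N ^+ e <= Kmat N k x)%MS.
Proof.
move=> Hx; elim: e => [|e IH]; first by rewrite expr0 mulmx1.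
rewrite exprSr -mulmxE mulmxA; apply: submx_trans (Kmat_mulN Hx).
exact: submxMr.
Qed.

Lemma sub_Kmat_mulexpN N k x (u : 'rV[C]_n) e : x *m N ^+ k = 0 -> (u <= Kmat N k x)%MS ->
  (u *m N ^+ e <= Kmat N k x)%MS.
Proof. move=> Hx Hu; apply: submx_trans (Kmat_mulexpN e Hx); exact: submxMr. Qed.

Lemma Kmat_row_free N k x : top N k x -> row_free (Kmat N k x).
Proof.
move=> /andP[/eqP Hk Hk1].
rewrite -kermx_eq0 -submx0; apply/row_subP => r0.
set c := row r0 (kermx (Kmat N k x)).
have Hc : c *m Kmat N k x = 0 by apply/sub_kermxP; rewrite row_sub.
suff -> : c = 0 by rewrite sub0mx.
have key : forall d, forall r : 'I_k, (k.-1 - r < d)%N -> c 0 r = 0.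
  elim=> [|d IH] r Hr; first by [].
  case: (ltnP (k.-1 - r) d) => Hrd; first exact: IH.
  have Hrd' : (k.-1 - r = d)%N by apply/eqP; rewrite eqn_leq Hrd -ltnS Hr.
  have : c *m Kmat N k x *m N ^+ r = 0 by rewrite Hc mul0mx.
  rewrite (mulmx_sum_row c) mulmx_suml (bigD1 r) //= big1 ?addr0; last first.
    move=> r' Hr'; rewrite row_Kmat -scalemxAl -mulmx_expD.
    case: (ltnP r' r) => Hlt.
      rewrite (expN_ge Hk) ?scaler0 //.
      have : (r' < k)%N := ltn_ord r'.
      have : (r < k)%N := ltn_ord r.
      move: Hlt; clear; lia.
    have Hr'' : (k.-1 - r' < d)%N.
      have : (r' != r) := Hr'. move: Hrd' (ltn_ord r') (ltn_ord r) Hlt.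
      move=> Hd Hr'k Hrk Hle Hne; rewrite -Hd.
      have : (nat_of_ord r' != nat_of_ord r) by [].
      clear -Hr'k Hrk Hle; lia.
    by rewrite IH // scale0r.
  rewrite row_Kmat -scalemxAl -mulmx_expD subnK; last first.
    have : (r < k)%N := ltn_ord r. clear; lia.
  move/eqP; rewrite scalemx_eq0 (negbTE Hk1) orbF => /eqP; done.
apply/rowP => r; rewrite [RHS]mxE; apply: (key k) => /=.
have : (r < k)%N := ltn_ord r. clear; lia.
Qed.

Lemma Kmat_rank N k x : top N k x -> \rank (Kmat N k x) = k.
Proof. by move/Kmat_row_free/eqP. Qed.

End Chains.



Section Jordan.
Variables (C : numClosedFieldType) (n : nat) (A' : 'M[C]_n) (lam : C).
Implicit Types (x y z w : 'rV[C]_n).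
Let N := (A' - lam%:M)^T.

Lemma Kmat_jordan k x : top N k x -> jordan_chain A' lam (Kmat N k x).
Proof.
move=> /andP[/eqP Hk Hk1]; split; [|split].
- move=> i; rewrite row_Kmat; apply: contra Hk1 => /eqP H.
  have k0 : (0 < k)%N := leq_ltn_trans (leq0n _) (ltn_ord i).
  have Hle : (i <= k.-1)%N by rewrite -ltnS prednK.
  rewrite -(subnK Hle).
  by rewrite mulmx_expD H mul0mx.
- move=> i Hi; rewrite row_Kmat Hi subn0 -mulmx_expS.
  have k0 : (0 < k)%N := leq_ltn_trans (leq0n _) (ltn_ord i).
  by rewrite prednK // Hk.
- move=> i j Hij; rewrite !row_Kmat -mulmx_expS; congr (_ *m _ ^+ _).
  have := ltn_ord i; rewrite Hij; lia.
Qed.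

Lemma pred_lt k : (0 < k)%N -> (k.-1 < k)%N.
Proof. by rewrite ltn_predL. Qed.

Lemma chain_Kmat k (X : 'M[C]_(k, n)) (k0 : (0 < k)%N) :
  jordan_chain A' lam X ->
  X = Kmat N k (row (Ordinal (pred_lt k0)) X) /\
  top N k (row (Ordinal (pred_lt k0)) X).
Proof.
case=> Hnz [H0 HS]; set y := row _ X.
have key : forall d (r : 'I_k), (k.-1 - r)%N = d -> row r X = y *m N ^+ d.
  elim=> [|d IH] r Hr.
    rewrite expr0 mulmx1 /y; congr row; apply: val_inj => /=.
    by move: Hr (ltn_ord r); clear; lia.
  have lt : (r.+1 < k)%N by move: Hr (ltn_ord r); clear; lia.
  rewrite -(HS (Ordinal lt) r) //= (IH (Ordinal lt)) /= ?mulmx_expS //.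
  by move: Hr; clear; lia.
have EX : X = Kmat N k y.
  by apply/row_matrixP => r; rewrite row_Kmat (key (k.-1 - r)%N r).
split=> //; apply/andP; split.
  have := H0 (Ordinal k0) erefl; rewrite (key (k.-1) (Ordinal k0)) /= ?subn0 //.
  by rewrite -mulmx_expS prednK // => ->.
by have := Hnz (Ordinal k0); rewrite (key (k.-1) (Ordinal k0)) /= ?subn0.
Qed.

Definition spec k x := top N k x /\ forall y, top N k y ->
  (forall i j, pb (Kmat N k x) i j -> pb (Kmat N k y) i j) ->
  (forall i j, pb (Kmat N k y) i j -> pb (Kmat N k x) i j) \/
  (Kmat N k y == fullsync C n)%MS.

Lemma mxeq_sym m1 m2 (U : 'M[C]_(m1, n)) (U' : 'M[C]_(m2, n)) :
  (U == U')%MS = (U' == U)%MS.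
Proof. by rewrite andbC. Qed.

Lemma Psub_eqmx m1 m2 m3 m4 (U : 'M[C]_(m1, n)) (U' : 'M[C]_(m2, n))
  (W : 'M[C]_(m3, n)) (W' : 'M[C]_(m4, n)) :
  (U == U')%MS -> (W == W')%MS -> Psub U W -> Psub U' W'.
Proof.
move=> EU EW H x Hx; apply: Pclosure_eqmx EW _; apply: H.
apply: Pclosure_eqmx Hx; by rewrite mxeq_sym.
Qed.

Lemma spec_special k x : spec k x -> special_jordan A' lam <<Kmat N k x>>%MS.
Proof.
move=> [Htop Hspec]; have k0 := top_gt0 Htop.
have EK : (<<Kmat N k x>> == Kmat N k x)%MS by apply/eqmxP; exact: genmxE.
split.
  by exists k, (Kmat N k x); split=> //; split=> //; exact: Kmat_jordan.
move=> U [k' [Y [k'0 [HY EU]]]] Hrank HPsub.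
have [EY Htopy] := chain_Kmat k'0 HY.
move: (row _ Y) EY Htopy => y EY Htopy; subst Y.
have Ekk : k' = k.
  by rewrite -(Kmat_rank Htopy) -(eqmx_rank EU) Hrank mxrank_gen Kmat_rank.
subst k'.
have H1 : Psub (Kmat N k y) (Kmat N k x) by apply: Psub_eqmx EU EK HPsub.
move/Psub_pb: H1 => H1.
have := Hspec y Htopy H1; case=> [H2 | HF].
  left; split=> //; apply: (Psub_eqmx (U := Kmat N k x) (W := Kmat N k y)).
  - by rewrite mxeq_sym.
  - by rewrite mxeq_sym.
  - apply/Psub_pb; exact: H2.
right; apply/eqmxP; exact: eqmx_trans (eqmxP EU) (eqmxP HF).
Qed.

End Jordan.



Section Span.
Variables (C : numClosedFieldType) (n : nat) (A' : 'M[C]_n) (lam : C).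
Implicit Types (x y z w : 'rV[C]_n).
Let N := (A' - lam%:M)^T.

Lemma Kmat_killed k y (u : 'rV[C]_n) : y *m N ^+ k = 0 -> (u <= Kmat N k y)%MS ->
  u *m N ^+ k = 0.
Proof.
move=> Hy /submxP[c ->]; rewrite -mulmxA.
suff -> : Kmat N k y *m N ^+ k = 0 by rewrite mulmx0.
apply/row_matrixP => r; rewrite row_mul row_Kmat row0 -mulmx_expD.
apply: (expN_ge Hy); clear; lia.
Qed.

Lemma tri k y x i0 j0 : y *m N ^+ k = 0 ->
  (y *m N ^+ k.-1) 0 i0 != (y *m N ^+ k.-1) 0 j0 ->
  exists w, (w - x <= Kmat N k y)%MS /\
    forall m, (m < k)%N -> (w *m N ^+ m) 0 i0 = (w *m N ^+ m) 0 j0.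
Proof.
move=> Hy Hb.
have k0 : (0 < k)%N.
  case: (posnP k) => // Ek; move: Hy Hb; rewrite Ek /= expr0 mulmx1 => ->.
  by rewrite !mxE eqxx.
suff : forall d, (d <= k)%N -> exists w, (w - x <= Kmat N k y)%MS /\
    forall m, (k - d <= m < k)%N -> (w *m N ^+ m) 0 i0 = (w *m N ^+ m) 0 j0.
  case/(_ k (leqnn k)) => w [H1 H2]; exists w; split=> // m Hm; apply: H2.
  by rewrite subnn.
elim=> [_|d IH Hd].
  exists x; rewrite subrr sub0mx; split=> // m; clear; lia.
have [w [Hw1 Hw2]] := IH (ltnW Hd).
set S := (k - d.+1)%N.
set b := y *m N ^+ k.-1.
set c := ((w *m N ^+ S) 0 i0 - (w *m N ^+ S) 0 j0) / (b 0 i0 - b 0 j0).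
exists (w - c *: (y *m N ^+ d)); split.
  rewrite addrAC; apply: addmx_sub => //.
  rewrite -scaleNr; apply: scalemx_sub.
  have lt : (k.-1 - d < k)%N by move: k0; clear; lia.
  have -> : y *m N ^+ d = row (Ordinal lt) (Kmat N k y).
    by rewrite row_Kmat /=; congr (_ *m _ ^+ _); move: Hd; clear; lia.
  exact: row_sub.
move=> m /andP[Hm1 Hm2].
rewrite mulmxBl -scalemxAl -mulmx_expD.
case: (ltnP S m) => HSm.
  rewrite (expN_ge Hy); last by move: HSm Hd; rewrite /S; clear; lia.
  rewrite scaler0 subr0; apply: Hw2; move: HSm Hm2 Hd; rewrite /S; clear; lia.
have -> : (d + m = k.-1)%N by move: HSm Hm1 Hd; rewrite /S; clear; lia.
have Em : m = S by apply/eqP; rewrite eqn_leq HSm Hm1.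
rewrite Em -/b.
have E : forall (P Q : 'rV[C]_n) a i, (P - a *: Q) 0 i = P 0 i - a * Q 0 i.
  by move=> P Q a i; rewrite !mxE.
rewrite !E.
have Hbne : b 0 i0 - b 0 j0 != 0 by rewrite subr_eq0.
have Hc : c * (b 0 i0 - b 0 j0) = (w *m N ^+ S) 0 i0 - (w *m N ^+ S) 0 j0.
  by rewrite /c divfK.
apply/eqP; rewrite -subr_eq0.
move: Hc; set a1 := (w *m N ^+ S) 0 i0; set a2 := (w *m N ^+ S) 0 j0 => Hc.
have -> : a1 - c * b 0 i0 - (a2 - c * b 0 j0) = (a1 - a2) - c * (b 0 i0 - b 0 j0) by ring.
by rewrite Hc subrr.
Qed.

End Span.



Section Span2.
Variables (C : numClosedFieldType) (n : nat) (A' : 'M[C]_n) (lam : C).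
Implicit Types (x y z w : 'rV[C]_n).
Let N := (A' - lam%:M)^T.
Hypothesis HPF : forall z, z *m N *m N = 0 ->
  (forall i j, (z *m N) 0 i = (z *m N) 0 j) -> z *m N = 0.

Variables (k : nat) (k0 : (0 < k)%N).
Let Z' := kermx (N ^+ k.-1).

Definition Qsp m (V : 'M[C]_(m, n)) := exists s : seq 'rV[C]_n,
  (forall y, y \in s -> spec A' lam k y) /\ (V <= Z' + \sum_(y <- s) <<y>>)%MS.

Lemma Qsp_sub m1 m2 (U : 'M[C]_(m1, n)) (V : 'M[C]_(m2, n)) :
  (U <= V)%MS -> Qsp V -> Qsp U.
Proof. by move=> H [s [Hs HV]]; exists s; split=> //; apply: submx_trans HV. Qed.

Lemma Qsp_add m1 m2 (U : 'M[C]_(m1, n)) (V : 'M[C]_(m2, n)) :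
  Qsp U -> Qsp V -> Qsp (U + V)%MS.
Proof.
move=> [s1 [Hs1 HU]] [s2 [Hs2 HV]]; exists (s1 ++ s2); split.
  by move=> y; rewrite mem_cat => /orP[]; [apply: Hs1 | apply: Hs2].
rewrite big_cat /= addsmx_sub; apply/andP; split.
  apply: submx_trans HU _; apply: addsmxS => //; exact: addsmxSl.
apply: submx_trans HV _; apply: addsmxS => //; exact: addsmxSr.
Qed.

Lemma Qsp_Z' : Qsp Z'.
Proof. by exists [::]; split=> //; exact: addsmxSl. Qed.

Definition mu x := #|[set p : 'I_n * 'I_n | ~~ pb (Kmat N k x) p.1 p.2]|.

Lemma mu_lt x y : (forall i j, pb (Kmat N k x) i j -> pb (Kmat N k y) i j) ->
  (exists i j, pb (Kmat N k y) i j /\ ~~ pb (Kmat N k x) i j) -> (mu y < mu x)%N.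
Proof.
move=> Hsub [i [j [Hy Hx]]]; apply: proper_card; apply/properP; split.
  apply/subsetP => p; rewrite !inE; apply: contra; exact: Hsub.
by exists (i, j); rewrite !inE /= ?Hy ?Hx.
Qed.

Lemma Ky_sub y : y *m N ^+ k = 0 -> (Kmat N k y <= Z' + y)%MS.
Proof.
move=> Hy; apply/row_subP => r; rewrite row_Kmat.
case: (posnP (k.-1 - r)%N) => He.
  by rewrite He expr0 mulmx1 addsmxSr.
apply: submx_trans (addsmxSl _ _); apply/sub_kermxP; rewrite -mulmx_expD.
apply: (expN_ge Hy); move: He; clear; lia.
Qed.

Lemma entE m (B : 'M[C]_(m, n)) r i : B r i = row r B 0 i.
Proof. by rewrite mxE. Qed.

Lemma addE (P Q : 'rV[C]_n) i : (P + Q) 0 i = P 0 i + Q 0 i.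
Proof. by rewrite mxE. Qed.

Lemma span_spec x : x *m N ^+ k = 0 -> Qsp x.
Proof.
move=> Hx; have [m Hm] : exists m, (mu x < m)%N by exists (mu x).+1.
elim: m x Hm Hx => // m IH x Hm Hx.
case: (eqVneq (x *m N ^+ k.-1) 0) => Hx1.
  apply: Qsp_sub Qsp_Z'; exact/sub_kermxP.
have Htop : top N k x by rewrite /top Hx eqxx Hx1.
case: (classic (spec A' lam k x)) => Hs.
  exists [:: x]; split; first by move=> y; rewrite inE => /eqP ->.
  rewrite big_cons big_nil.
  apply: submx_trans (addsmxSr Z' _); apply: submx_trans (addsmxSl _ 0).
  by rewrite genmxE.
have [y [Hty [Hsub Hn]]] : exists y, top N k y /\
   (forall i j, pb (Kmat N k x) i j -> pb (Kmat N k y) i j) /\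
   ~ ((forall i j, pb (Kmat N k y) i j -> pb (Kmat N k x) i j) \/
      (Kmat N k y == fullsync C n)%MS).
  apply: NNPP => Hc; apply: Hs; split=> // y Hty Hsub; apply: NNPP => Hn.
  by apply: Hc; exists y.
have Hn1 : ~ (forall i j, pb (Kmat N k y) i j -> pb (Kmat N k x) i j).
  by move=> H; apply: Hn; left.
have HnF : ~ (Kmat N k y == fullsync C n)%MS by move=> H; apply: Hn; right.
have [i1 [j1 [Hy1 Hx1']]] : exists i j, pb (Kmat N k y) i j /\ ~~ pb (Kmat N k x) i j.
  apply: NNPP => Hc; apply: Hn1 => i j Hij.
  case: (boolP (pb (Kmat N k x) i j)) => // Hb; exfalso; apply: Hc; by exists i, j.
have Hyk : y *m N ^+ k = 0 by case/andP: Hty => /eqP.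
have [i0 [j0 Hb]] : exists i j, (y *m N ^+ k.-1) 0 i != (y *m N ^+ k.-1) 0 j.
  apply: NNPP => Hc.
  have Hall : forall i j, (y *m N ^+ k.-1) 0 i = (y *m N ^+ k.-1) 0 j.
    move=> i j; apply/eqP; case: (boolP (_ == _)) => // Hne; exfalso; apply: Hc.
    by exists i, j.
  case/andP: Hty => _ Hyn.
  case: (ltnP 1 k) => Hk1.
    set z := y *m N ^+ k.-2.
    have Ez : z *m N = y *m N ^+ k.-1.
      by rewrite /z -mulmx_expS; congr (_ *m _ ^+ _); move: Hk1; clear; lia.
    have Hz : z *m N *m N = 0.
      by rewrite Ez -mulmx_expS prednK.
    have H := HPF Hz; rewrite Ez in H; by rewrite (H Hall) eqxx in Hyn.
  have Ek1 : k.-1 = 0%N by move: Hk1 k0; clear; lia.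
  rewrite Ek1 expr0 mulmx1 in Hall Hyn.
  have [i Hi] : exists i, y 0 i != 0.
    apply: NNPP => Hc2; move/eqP: Hyn; apply; apply/rowP => j; rewrite mxE.
    apply/eqP; case: (boolP (_ == _)) => // Hne; exfalso; apply: Hc2; by exists j.
  have Ey : y = y 0 i *: fullsync C n.
    by apply/rowP => j; rewrite !mxE mulr1 (Hall j i).
  apply: HnF; apply/andP; split.
    apply/row_subP => r; rewrite row_Kmat Ek1 expr0 mulmx1 Ey; exact: scalemx_sub.
  apply: submx_trans (row_sub (Ordinal k0) _); rewrite row_Kmat Ek1 expr0 mulmx1.
  have -> : fullsync C n = (y 0 i)^-1 *: y by rewrite {2}Ey scalerA mulVf // scale1r.
  exact: scalemx_sub.
have [w [Hw1 Hw2]] := tri x Hyk Hb.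
have Hwk : w *m N ^+ k = 0.
  have -> : w = (w - x) + x by rewrite subrK.
  by rewrite mulmxDl Hx (Kmat_killed Hyk Hw1) addr0.
have Hrow : forall r, row r (Kmat N k w) = row r (Kmat N k x) + (w - x) *m N ^+ (k.-1 - r).
  by move=> r; rewrite !row_Kmat -mulmxDl addrC subrK.
have Hsubw : forall i j, pb (Kmat N k x) i j -> pb (Kmat N k w) i j.
  move=> i j Hij; apply/pbP => r; rewrite !(entE (Kmat N k w)) Hrow !addE.
  congr (_ + _); first by rewrite -!entE; exact: (pbP _ _ _ Hij).
  apply: (pb_sub (B := Kmat N k y)); last exact: Hsub.
  exact: sub_Kmat_mulexpN.
have Hw0 : pb (Kmat N k w) i0 j0.
  apply/pbP => r; rewrite !(entE (Kmat N k w)) row_Kmat; apply: Hw2.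
  move: (ltn_ord r) k0; clear; lia.
have Hnx0 : ~~ pb (Kmat N k x) i0 j0.
  apply: contra Hb => /Hsub /pbP /(_ (Ordinal k0)).
  by rewrite !(entE (Kmat N k y)) row_Kmat /= subn0 => ->.
have Lw : (mu w < mu x)%N by apply: mu_lt Hsubw _; exists i0, j0.
have Ly : (mu y < mu x)%N by apply: mu_lt Hsub _; exists i1, j1.
have Qw : Qsp w by apply: IH => //; lia.
have Qy : Qsp y by apply: IH => //; lia.
apply: (Qsp_sub (V := (w + (Z' + y))%MS)); last by apply: Qsp_add => //; apply: Qsp_add => //; exact: Qsp_Z'.
have -> : x = w + (- (w - x)) by rewrite opprB addrC subrK.
apply: addmx_sub_adds => //; rewrite eqmx_opp.
exact: submx_trans Hw1 (Ky_sub Hyk).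
Qed.

Lemma Qsp_rows m (B : 'M[C]_(m, n)) : (forall r, Qsp (row r B)) -> Qsp B.
Proof.
move=> H; apply: (Qsp_sub (V := (\sum_(r < m) <<row r B>>)%MS)).
  apply/row_subP => r; apply: (sumsmx_sup r) => //; by rewrite genmxE.
apply: big_ind => //.
- by exists [::]; split=> //; rewrite sub0mx.
- move=> U V; exact: Qsp_add.
- move=> r _; apply: Qsp_sub (H r); by rewrite genmxE.
Qed.

Lemma span_Z : exists s : seq 'rV[C]_n, (forall y, y \in s -> spec A' lam k y) /\
  (kermx (N ^+ k) <= kermx (N ^+ k.-1) + \sum_(y <- s) <<y>>)%MS.
Proof.
apply: Qsp_rows => r; apply: span_spec; apply/sub_kermxP; exact: row_sub.
Qed.

End Span2.



Section Levels.
Variables (C : numClosedFieldType) (n : nat) (N : 'M[C]_n).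
Implicit Types (x y z w : 'rV[C]_n) (s : seq 'rV[C]_n).

Notation Z k := (kermx (N ^+ k)).
Definition Ssum s : 'M[C]_n := (\sum_(u <- s) <<u>>)%MS.

Fixpoint indepI (Zm : 'M[C]_n) s : bool :=
  match s with
  | [::] => true
  | v :: s' => ~~ (v <= Zm + Ssum s')%MS && indepI Zm s'
  end.

Lemma Ssum_cons v s : Ssum (v :: s) = (<<v>> + Ssum s)%MS.
Proof. by rewrite /Ssum big_cons. Qed.

Lemma Ssum_cat s1 s2 : Ssum (s1 ++ s2) = (Ssum s1 + Ssum s2)%MS.
Proof. by rewrite /Ssum big_cat. Qed.

Lemma Ssum_sup s u : u \in s -> (u <= Ssum s)%MS.
Proof.
elim: s => // v s IH; rewrite inE Ssum_cons => /orP[/eqP ->|/IH H].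
  by apply: submx_trans (addsmxSl _ _); rewrite genmxE.
exact: submx_trans H (addsmxSr _ _).
Qed.

Lemma Ssum_subP s m (B : 'M[C]_(m, n)) :
  (forall u, u \in s -> (u <= B)%MS) -> (Ssum s <= B)%MS.
Proof.
elim: s => [|v s IH] H; first by rewrite /Ssum big_nil sub0mx.
rewrite Ssum_cons addsmx_sub genmxE H ?mem_head //=.
by apply: IH => u Hu; apply: H; rewrite inE Hu orbT.
Qed.

Lemma rank_indep Zm s : indepI Zm s -> \rank (Zm + Ssum s)%MS = (\rank Zm + size s)%N.
Proof.
elim: s => [|v s IH] /=.
  by move=> _; rewrite /Ssum big_nil addsmx0 addn0.
case/andP => Hv /IH Hr.
rewrite Ssum_cons addsmxA [(Zm + _)%MS]addsmxC -addsmxA.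
set W := (Zm + Ssum s)%MS.
have H1 : (\rank W < \rank (<<v>> + W)%MS)%N.
  have := mxrank_leqif_sup (addsmxSr <<v>>%MS W).
  move=> [Hle Heq]; rewrite ltn_neqAle Hle andbT Heq addsmx_sub submx_refl andbT.
  by rewrite genmxE.
have H2 : (\rank (<<v>> + W)%MS <= \rank <<v>>%MS + \rank W)%N := mxrank_adds_leqif _ _.
have H3 : (\rank <<v>>%MS <= 1)%N by rewrite mxrank_gen rank_leq_row.
rewrite Hr in H1 H2 *; move: H1 H2 H3; clear; lia.
Qed.

Lemma greedy Zm L s : indepI Zm L -> exists T, (forall t, t \in T -> t \in s) /\
  indepI Zm (T ++ L) /\ (Ssum s <= Zm + Ssum (T ++ L))%MS.
Proof.
move=> HL; elim: s => [|v s [T [HT1 [HT2 HT3]]]].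
  by exists [::]; split=> //; split=> //; rewrite /Ssum big_nil sub0mx.
case: (boolP (v <= Zm + Ssum (T ++ L))%MS) => Hv.
  exists T; split; first by move=> t /HT1; rewrite inE => ->; rewrite orbT.
  split=> //; rewrite Ssum_cons addsmx_sub HT3 andbT genmxE //.
exists (v :: T); split.
  by move=> t; rewrite !inE => /orP[->|/HT1 ->]; rewrite ?orbT.
split; first by rewrite /= Hv HT2.
rewrite Ssum_cons /= Ssum_cons addsmx_sub; apply/andP; split.
  by apply: submx_trans (addsmxSr _ _); apply: addsmxSl.
apply: submx_trans HT3 _; apply: addsmxS => //; exact: addsmxSr.
Qed.

Lemma mulmx_expSl x k : x *m N ^+ k.+1 = x *m N *m N ^+ k.
Proof. by rewrite exprS -mulmxE mulmxA. Qed.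

Lemma indep_mulN k s : indepI (Z k.+1) s -> indepI (Z k) [seq u *m N | u <- s].
Proof.
elim: s => //= v s IH /andP[Hv Hs]; rewrite IH // andbT.
apply: contra Hv => H.
have HS : (Ssum [seq u *m N | u <- s] <= Ssum s *m N)%MS.
  apply: Ssum_subP => u /mapP[u' Hu' ->]; apply: submxMr; exact: Ssum_sup.
have : (v *m N <= Z k + Ssum s *m N)%MS.
  apply: submx_trans H _; apply: addsmxS => //.
case/sub_addsmxP => [[a b]] /= E.
have Hk : (v - b *m Ssum s <= Z k.+1)%MS.
  apply/sub_kermxP; rewrite mulmx_expSl mulmxBl E -mulmxA addrK -mulmxA.
  by rewrite mulmx_ker mulmx0.
have -> : v = (v - b *m Ssum s) + b *m Ssum s by rewrite subrK.
by apply: addmx_sub_adds => //; apply: submxMl.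
Qed.

Variable Al : nat -> 'rV[C]_n -> Prop.
Hypothesis HAl : forall k x, Al k x -> x *m N ^+ k = 0.
Hypothesis Hsp : forall k, (0 < k)%N -> exists s, (forall y, y \in s -> Al k y) /\
  (Z k <= Z k.-1 + Ssum s)%MS.

Definition lev k (F : seq (nat * 'rV[C]_n)) := [seq p.2 *m N ^+ (p.1 - k) | p <- F].
Definition chainsp k (F : seq (nat * 'rV[C]_n)) : 'M[C]_n :=
  (\sum_(p <- F) \sum_(e < p.1 - k) <<p.2 *m N ^+ e>>)%MS.

Definition Inv k F := (forall p, p \in F -> Al p.1 p.2 /\ (k < p.1)%N) /\
  indepI (Z k) (lev k.+1 F) /\ (Z n <= Z k + chainsp k F)%MS /\
  \rank (Z n) = (\rank (Z k) + \sum_(p <- F) (p.1 - k))%N.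

Lemma Inv_base : Inv n [::].
Proof.
split=> //; split=> //; split; first exact: addsmxSl.
by rewrite big_nil addn0.
Qed.

Lemma Inv_step k F : Inv k.+1 F -> exists F', Inv k F'.
Proof.
move=> [HF [Hind [Hspan Hrk]]].
set L := lev k.+1 F.
have EL : L = [seq u *m N | u <- lev k.+2 F].
  rewrite /L /lev -map_comp; apply/eq_in_map => p Hp /=.
  rewrite -mulmx_expS; congr (_ *m _ ^+ _).
  by have := (HF p Hp).2; clear; lia.
have HindL : indepI (Z k) L by rewrite EL; apply: indep_mulN.
have [s [Hs1 Hs2]] := Hsp (ltn0Sn k).
have [T [HT1 [HT2 HT3]]] := greedy (Zm := Z k) s HindL.
exists ([seq (k.+1, t) | t <- T] ++ F).
have HLZ : forall u, u \in L -> (u <= Z k.+1)%MS.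
  move=> u /mapP[p Hp ->]; apply/sub_kermxP; rewrite -mulmx_expD subnK.
    exact: HAl (HF p Hp).1.
  by have := (HF p Hp).2; move/ltnW.
have HTZ : forall t, t \in T -> (t <= Z k.+1)%MS.
  by move=> t /HT1 /Hs1 /HAl H; apply/sub_kermxP.
have EZ : (Z k.+1 :=: Z k + Ssum (T ++ L))%MS.
  apply/eqmxP/andP; split.
    by apply: submx_trans Hs2 _; rewrite addsmx_sub addsmxSl.
  rewrite addsmx_sub; apply/andP; split.
    by apply/sub_kermxP; rewrite exprSr -mulmxE mulmxA mulmx_ker mul0mx.
  apply: Ssum_subP => u; rewrite mem_cat => /orP[]; [exact: HTZ | exact: HLZ].
have ElevT : lev k.+1 [seq (k.+1, t) | t <- T] = T.
  rewrite /lev -map_comp /= -[RHS]map_id; apply: eq_map => t /=.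
  by rewrite subnn expr0 mulmx1.
have Echain : chainsp k ([seq (k.+1, t) | t <- T] ++ F) =
    (Ssum T + (chainsp k.+1 F + Ssum L))%MS.
  rewrite /chainsp big_cat big_map /=; congr (_ + _)%MS.
    rewrite /Ssum; apply: eq_bigr => t _.
    by rewrite subSnn big_ord1 expr0 mulmx1.
  rewrite /Ssum /L /lev big_map -big_split /= big_seq [RHS]big_seq.
  apply: eq_bigr => p Hp.
  have Ep : (p.1 - k = (p.1 - k.+1).+1)%N by rewrite subnSK //; apply: ltnW; exact: (HF p Hp).2.
  by rewrite Ep big_ord_recr.
split.
  move=> p; rewrite mem_cat => /orP[/mapP[t Ht ->]|Hp] /=.
    by split=> //; apply: Hs1; apply: HT1.
  by have [H1 H2] := HF p Hp; split=> //; apply: ltnW.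
split; first by rewrite /lev map_cat -/(lev k.+1 _) ElevT.
split.
  apply: submx_trans Hspan _; rewrite Echain addsmx_sub; apply/andP; split.
    rewrite EZ Ssum_cat addsmx_sub addsmxSl /= addsmx_sub; apply/andP; split.
      by apply: submx_trans (addsmxSr _ _); apply: addsmxSl.
    by apply: submx_trans (addsmxSr _ _); apply: submx_trans (addsmxSr _ _); apply: addsmxSr.
  by apply: submx_trans (addsmxSr _ _); apply: submx_trans (addsmxSr _ _); apply: addsmxSl.
rewrite Hrk (eqmx_rank (introT eqmxP EZ)) rank_indep // size_cat /L /lev size_map.
rewrite big_cat big_map /=.
have HT : (\sum_(j <- T) (k.+1 - k) = size T)%N by rewrite subSnn sum1_size.
rewrite HT.
have -> : (\sum_(p <- F) (p.1 - k) = \sum_(p <- F) (p.1 - k.+1) + size F)%N.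
  rewrite -sum1_size -big_split /= big_seq [RHS]big_seq; apply: eq_bigr => p Hp.
  by rewrite addn1 subnSK //; apply: ltnW; exact: (HF p Hp).2.
move: (\rank (Z k)) (size T) (size F) (\sum_(p <- F) (p.1 - k.+1))%N => a b c d; lia.
Qed.

Lemma levels : exists F, Inv 0 F.
Proof.
suff : forall d, (d <= n)%N -> exists F, Inv (n - d) F.
  by move/(_ n (leqnn n)); rewrite subnn.
elim=> [_|d IH Hd]; first by rewrite subn0; exists [::]; exact: Inv_base.
have [F HF] := IH (ltnW Hd).
have E : (n - d = (n - d.+1).+1)%N by move: Hd; clear; lia.
rewrite E in HF; exact: Inv_step HF.
Qed.

End Levels.



Section PF.
Variables (C : numClosedFieldType) (n : nat) (A : 'M[nat]_n) (lam : C).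
Hypothesis HA : regular_network A.
Let N := (adjC C A - lam%:M)^T.

Lemma mulN_entry (u : 'rV[C]_n) i :
  (u *m N) 0 i = \sum_j u 0 j * (A i j)%:R - lam * u 0 i.
Proof.
rewrite mxE.
have -> : \sum_(j < n) u 0 j * N j i = \sum_(j < n) (u 0 j * (A i j)%:R - lam * (u 0 j * ((i == j)%:R : C))).
  by apply: eq_bigr => j _; rewrite !mxE -mulr_natr; ring.
rewrite sumrB; congr (_ - _); rewrite -mulr_sumr; congr (_ * _).
rewrite (bigD1 i) //= eqxx mulr1 big1 ?addr0 // => j Hj.
by rewrite eq_sym (negbTE Hj) mulr0.
Qed.

Lemma argmax_real (f : 'I_n -> C) (i0 : 'I_n) : (forall i, f i \is Num.real) ->
  exists im, forall i, f i <= f im.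
Proof.
move=> Hr.
suff : forall s : seq 'I_n, exists im, forall i, i \in s -> f i <= f im.
  by case/(_ (enum 'I_n)) => im H; exists im => i; apply: H; rewrite mem_enum.
elim=> [|a s [im IH]]; first by exists i0.
case/orP: (real_leVge (Hr a) (Hr im)) => H.
  exists im => i; rewrite inE => /orP[/eqP ->|]; [exact: H | exact: IH].
exists a => i; rewrite inE => /orP[/eqP ->|/IH Hi]; first exact: lexx.
exact: le_trans Hi H.
Qed.

Lemma PF (z : 'rV[C]_n) : z *m N *m N = 0 ->
  (forall i j, (z *m N) 0 i = (z *m N) 0 j) -> z *m N = 0.
Proof.
move=> H2 Hall; apply: NNPP => Hb.
have [i0 Hi0] : exists i, (z *m N) 0 i != 0.
  apply: NNPP => Hc; apply: Hb; apply/rowP => j; rewrite [RHS]mxE.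
  apply/eqP; case: (boolP (_ == _)) => // Hne; exfalso; apply: Hc; by exists j.
set c := (z *m N) 0 i0.
have Eb : z *m N = c *: fullsync C n.
  by apply/rowP => j; rewrite (Hall j i0) -/c !mxE mulr1.
have [v Hv] := HA.
have H1 : fullsync C n *m N = 0.
  move: H2; rewrite Eb -scalemxAl => /eqP; rewrite scalemx_eq0 (negbTE Hi0) /=.
  by move/eqP.
have Elam : lam = v%:R.
  have := congr1 (fun M : 'rV[C]_n => M 0 i0) H1; rewrite mulN_entry mxE.
  under eq_bigr => j _ do rewrite mxE mul1r.
  rewrite -natr_sum Hv mxE mulr1 => /eqP; rewrite subr_eq0 => /eqP; done.
have Ez : forall i, \sum_j z 0 j * (A i j)%:R - v%:R * z 0 i = c.
  move=> i; rewrite -Elam -mulN_entry Eb !mxE mulr1 //.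
set w := fun i => 'Re (z 0 i / c).
have Ew : forall i, \sum_j w j * (A i j)%:R - v%:R * w i = 1.
  move=> i.
  transitivity ('Re ((\sum_j z 0 j * (A i j)%:R - v%:R * z 0 i) / c)); last first.
    rewrite Ez divff //; apply/Creal_ReP; exact: rpred1.
  rewrite mulrBl mulr_suml raddfB /= raddf_sum /=; congr (_ - _).
    apply: eq_bigr => j _; rewrite /w -ReMr ?realn //.
    by rewrite mulrAC.
  by rewrite /w -mulrA [RHS](ReMl (realn _ v)).
have [im Him] := argmax_real i0 (fun i => Creal_Re _ : w i \is Num.real).
have := Ew im.
have Hle : \sum_j w j * (A im j)%:R <= v%:R * w im.
  rewrite -(Hv im) natr_sum mulr_suml; apply: ler_sum => j _.
  by rewrite mulrC; apply: ler_wpM2l; [exact: ler0n | exact: Him].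
move=> E; have : (1 : C) <= 0 by rewrite -E subr_le0.
by rewrite ler10.
Qed.

End PF.



Section PerEig.
Variables (C : numClosedFieldType) (n : nat) (A : 'M[nat]_n) (lam : C).
Hypothesis HA : regular_network A.
Let N := (adjC C A - lam%:M)^T.

Lemma sum_chain_Kmat l (x : 'rV[C]_n) :
  (\sum_(e < l) <<x *m N ^+ e>> <= Kmat N l x)%MS.
Proof.
apply/sumsmx_subP => e _; rewrite genmxE.
have lt : (l.-1 - e < l)%N by move: (ltn_ord e); lia.
have -> : x *m N ^+ e = row (Ordinal lt) (Kmat N l x).
  rewrite row_Kmat /=; congr (_ *m _ ^+ _); move: (ltn_ord e); lia.
exact: row_sub.
Qed.

Lemma kermx_one : kermx (N ^+ 0) = 0.
Proof.
apply/eqP; rewrite expr0 kermx_eq0 row_free_unit; exact: unitmx1.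
Qed.

Lemma per_eig : exists F : seq (nat * 'rV[C]_n),
  (forall p, p \in F -> spec (adjC C A) lam p.1 p.2) /\
  (kermx (N ^+ n) <= \sum_(p <- F) <<Kmat N p.1 p.2>>)%MS /\
  (\sum_(p <- F) p.1)%N = \rank (kermx (N ^+ n)).
Proof.
have := @levels C n N (fun k x => spec (adjC C A) lam k x).
case.
- by move=> k x [/andP[/eqP H _] _].
- move=> k k0; apply: span_Z => //; exact: PF.
move=> F [HF [_ [Hspan Hrk]]].
exists F; split; first by move=> p /HF [].
split.
  apply: submx_trans Hspan _; rewrite kermx_one adds0mx_id.
  rewrite /chainsp; apply: (big_ind2 (fun X Y : 'M[C]_n => (X <= Y)%MS)).
  - exact: submx_refl.
  - by move=> X1 X2 Y1 Y2 H1 H2; apply: addsmxS.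
  - by move=> p _; rewrite subn0 genmxE; apply: sum_chain_Kmat.
rewrite Hrk kermx_one mxrank0 add0n; apply: eq_bigr => p _; by rewrite subn0.
Qed.

End PerEig.



Section Final.
Variables (C : numClosedFieldType) (n' : nat) (A : 'M[nat]_n'.+1).
Hypothesis HA : regular_network A.
Let g := (adjC C A)^T.

Lemma NE (lam : C) : (adjC C A - lam%:M)^T = g - lam%:M.
Proof. by apply/matrixP => i j; rewrite !mxE eq_sym. Qed.

Lemma eig_decomp : exists r (lamb : 'I_r -> C),
  (\sum_(i < r) geigenspace g (lamb i) :=: 1%:M)%MS /\
  mxdirect (\sum_(i < r) geigenspace g (lamb i)).
Proof.
have [rs Hrs] := closed_field_poly_normal (char_poly g).
rewrite (monicP (char_poly_monic g)) scale1r in Hrs.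
have Hsz : size rs = n'.+1.
  have := size_char_poly g; rewrite Hrs size_prod_XsubC => /eqP; rewrite eqSS => /eqP //.
set s := undup rs.
exists (size s), (fun i => nth 0 s i).
have Hinj : {in predT &, injective (fun i : 'I_(size s) => nth 0 s i)}.
  move=> i j _ _ /eqP; rewrite nth_uniq ?undup_uniq // => /eqP; exact: val_inj.
split; last exact: mxdirect_sum_geigenspace.
have Hcop : {in predT &, forall i j : 'I_(size s), j != i ->
   coprimep (('X - (nth 0 s i)%:P) ^+ n'.+1) (('X - (nth 0 s j)%:P) ^+ n'.+1)}.
  move=> i j _ _ Nji.
  rewrite coprimep_expr ?coprimep_expl// coprimep_XsubC root_XsubC.
  by apply: contra Nji => /eqP /(Hinj _ _ isT isT) ->.
have E1 := kermxpoly_prod g Hcop.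
have Hdvd : mxminpoly g %| \prod_(i : 'I_(size s) | predT i) ('X - (nth 0 s i)%:P) ^+ n'.+1.
  apply: dvdp_trans (mxminpoly_dvd_char g) _.
  rewrite Hrs -prodr_undup_exp_count -/s (big_nth 0) big_mkord.
  apply: (big_ind2 (fun p q : {poly C} => p %| q)) => //.
  - by move=> p1 p2 q1 q2 H1 H2; apply: dvdp_mul.
  - move=> i _; apply: dvdp_exp2l; rewrite -Hsz; exact: count_size.
have E2 := kermxpoly_min Hdvd.
exact: eqmx_trans (eqmx_sym E1) E2.
Qed.

Lemma main_succ : exists (m : nat) (J : 'I_m -> 'M[C]_n'.+1),
    (forall i : 'I_m, exists lam : C, special_jordan (adjC C A) lam (J i)) /\
    mxdirect (\sum_(i < m) J i)%MS /\
    ((\sum_(i < m) J i)%MS == 1%:M)%MS.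
Proof.
have [r [lamb [Efull Hdir]]] := eig_decomp.
pose NN (i : 'I_r) := (adjC C A - (lamb i)%:M)^T.
have HG : forall i, geigenspace g (lamb i) = kermx (NN i ^+ n'.+1).
  by move=> i; rewrite geigenspaceE /NN NE.
have : forall i : 'I_r, exists F : seq (nat * 'rV[C]_n'.+1),
  (forall p, p \in F -> spec (adjC C A) (lamb i) p.1 p.2) /\
  (kermx (NN i ^+ n'.+1) <= \sum_(p <- F) <<Kmat (NN i) p.1 p.2>>)%MS /\
  (\sum_(p <- F) p.1)%N = \rank (kermx (NN i ^+ n'.+1)).
  move=> i; exact: per_eig.
case/fin_all_exists => Fs HFs.
pose L := flatten [seq [seq <<Kmat (NN i) p.1 p.2>>%MS | p <- Fs i] | i <- index_enum 'I_r].
exists (size L), (fun t => nth 0 L t).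
have Esum : forall (R : Type) (idx : R) (op : Monoid.com_law idx) (f : 'M[C]_n'.+1 -> R),
  \big[op/idx]_(t < size L) f (nth 0 L t) =
  \big[op/idx]_(i < r) \big[op/idx]_(p <- Fs i) f <<Kmat (NN i) p.1 p.2>>%MS.
  move=> R idx op f.
  rewrite -(big_mkord xpredT (fun t => f (nth 0 L t))) -(big_nth 0 xpredT f).
  rewrite big_flatten big_map; apply: eq_bigr => i _; by rewrite big_map.
have Hspan : (1%:M <= \sum_(t < size L) nth 0 L t)%MS.
  rewrite (Esum _ _ _ id) -Efull; apply: sumsmxS => i _.
  by rewrite HG; case: (HFs i) => _ [].
split.
  move=> t; have : nth 0 L t \in L by apply: mem_nth.
  case/flattenP => l /mapP [i _ ->] /mapP [p Hp ->].
  exists (lamb i); apply: spec_special; exact: (HFs i).1.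
split; last by rewrite submx1.
rewrite mxdirectEgeq /=.
have -> : \rank (\sum_(t < size L) nth 0 L t)%MS = n'.+1.
  by apply/eqP; rewrite eqn_leq rank_leq_col -{1}(mxrank1 C n'.+1) mxrankS.
rewrite (Esum _ _ _ (fun M => \rank M)).
apply: (@leq_trans (\sum_(i < r) \rank (geigenspace g (lamb i)))); last first.
  move: Hdir; rewrite mxdirectE /= => /eqP <-.
  by rewrite (eqmx_rank (introT eqmxP Efull)) mxrank1.
apply: leq_sum => i _; rewrite HG; case: (HFs i) => _ [_ <-].
apply: leq_sum => p _; rewrite mxrank_gen; exact: rank_leq_row.
Qed.

End Final.

Theorem mainTheorem6 (C : numClosedFieldType) (n : nat) (A : 'M[nat]_n) :
  regular_network A ->
  exists (m : nat) (J : 'I_m -> 'M[C]_n),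
    (forall i : 'I_m, exists lam : C, special_jordan (adjC C A) lam (J i)) /\
    mxdirect (\sum_(i < m) J i)%MS /\
    ((\sum_(i < m) J i)%MS == 1%:M)%MS.
Proof.
case: n A => [|n'] A HA; last exact: main_succ.
exists 0%N, (fun _ => 0); split; first by case.
split; first by rewrite mxdirectE /= !big_ord0 mxrank0.
by rewrite [X in (X == _)%MS]thinmx0 [X in (_ == X)%MS]thinmx0 /= submx_refl.
Qed.
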